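(* Let $k\ge1$ channels and $n>k$ players, each with one packet, under ternary feedback. Under protocol SOP — in every slot $t\ge1$, when $m$ players are pending ($1\le m\le n$), every pending player transmits on each channel with probability $1/\max\{m,k\}$ and stays idle with the remaining probability, independently — the expected finishing time (the first slot by which all players have transmitted successfully) is $O((n-k)/k)$.
   Context: In each slot, a player transmitting alone on a channel succeeds and leaves; two or more players transmitting on the same channel collide and remain pending. Ternary feedback: every pending player knows the current number $m$ of pending players in every slot. *)

(* Defs.v *)
From HB Require Import structures.
From mathcomp Require Import all_boot all_order all_algebra.
From mathcomp Require Import reals.
Set Implicit Arguments. Unset Strict Implicit. Unset Printing Implicit Defensive.
Import Order.TTheory GRing.Theory Num.Theory.
Local Open Scope ring_scope.

Section SOP.
Variable R : realType.

(* Action of one pending player in a slot when m players are pending: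
   [Some j] = transmit on channel j (prob 1/max(m,k) each),
   [None]   = stay idle (remaining probability). *)
Definition act_prob (k m : nat) (a : option 'I_k) : R :=
  match a with
  | Some _ => 1 / (maxn m k)%:R
  | None => 1 - k%:R / (maxn m k)%:R
  end.

Definition config_prob (k m : nat) (f : {ffun 'I_m -> option 'I_k}) : R :=
  \prod_(i < m) @act_prob k m (f i).

Definition successes (k m : nat) (f : {ffun 'I_m -> option 'I_k}) : nat :=
  #|[set j : 'I_k | #|[set i : 'I_m | f i == Some j]| == 1%N]|.

Definition trans (k m m' : nat) : R :=
  \sum_(f : {ffun 'I_m -> option 'I_k} | (m - @successes k m f)%N == m') @config_prob k m f.

(* alive k n t m = probability that after t slots the protocol has not yet
   finished (some player still pending at every slot so far) and exactly m
   players are pending; start: n pending players. *)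
Fixpoint alive (k n t m' : nat) {struct t} : R :=
  match t with
  | 0 => (m' == n)%:R
  | t.+1 => if m' == 0%N then 0
            else \sum_(1 <= m < n.+1) alive k n t m * trans k m m'
  end.

(* P(T > t), T = finishing time (first slot by which all players succeeded). *)
Definition tail_prob (k n t : nat) : R := \sum_(1 <= m < n.+1) alive k n t m.

(* Partial sums of E[T] = sum_{t >= 0} P(T > t). *)
Definition expected_time_partial (k n N : nat) : R :=
  \sum_(t < N) tail_prob k n t.

End SOP.

(* Main.v *)
Require Import Defs.
From HB Require Import structures.
From mathcomp Require Import all_boot all_order all_algebra.
From mathcomp Require Import reals.
From mathcomp Require Import zify.
From mathcomp.algebra_tactics Require Import ring lra.
Import Order.TTheory GRing.Theory Num.Theory.
Local Open Scope ring_scope.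

Section Proofs.
Variable R : realType.

Lemma sum_option (T : finType) (F : option T -> R) :
  \sum_(a : option T) F a = F None + \sum_(j : T) F (Some j).
Proof.
rewrite (bigD1 None) //=; congr (_ + _).
rewrite (reindex_omap Some id).
  by apply: eq_bigl => j /=; rewrite eqxx.
by case.
Qed.

Lemma bernoulli (x : R) (n : nat) : 0 <= x -> x <= 1 ->
  1 - n%:R * x <= (1 - x) ^+ n.
Proof.
move=> x0 x1; elim: n => [|n IH]; first by rewrite expr0 mul0r subr0.
rewrite exprSr -natr1.
have h1 : 0 <= 1 - x by lra.
set y := (1 - x) ^+ n in IH *.
have h2 : 0 <= (y - (1 - n%:R * x)) * (1 - x) by apply: mulr_ge0 => //; lra.
have h3 : 0 <= n%:R * x * x by apply: mulr_ge0 => //; apply: mulr_ge0.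
nra.
Qed.

Lemma quarter (M : nat) : (1 <= M)%N -> 1 / 4 <= (1 - 1 / M%:R) ^+ M.-1 :> R.
Proof.
move=> M1.
set a := (M.-1)./2. set b := (M.-1 - a)%N.
have hab : M.-1 = (a + b)%N by rewrite /b; lia.
have Mp : 0 < M%:R :> R by rewrite ltr0n.
have x0 : 0 <= 1 / M%:R :> R by rewrite divr_ge0.
have x1 : 1 / M%:R <= 1 :> R by rewrite ler_pdivrMr // mul1r ler1n.
have hd := odd_double_half (M.-1). rewrite -/a -muln2 in hd.
have ha : (2 * a <= M)%N by case: (odd _) hd => /=; lia.
have hb : (2 * b <= M)%N by rewrite /b; case: (odd _) hd => /=; lia.
have key : forall c, (2 * c <= M)%N -> 1 / 2 <= (1 - 1 / M%:R) ^+ c :> R.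
  move=> c hc; have bc := @bernoulli _ c x0 x1.
  have : (2 * c)%:R <= M%:R :> R by rewrite ler_nat.
  rewrite natrM => h.
  have e : c%:R * (1 / M%:R) = c%:R / M%:R :> R by rewrite mul1r.
  rewrite e in bc.
  have : c%:R / M%:R <= 1 / 2 :> R.
    by rewrite ler_pdivrMr //; lra.
  lra.
rewrite hab exprD.
have := key a ha; have := key b hb.
have : 0 <= 1 - 1 / M%:R :> R by lra.
move=> p hb' ha'.
have : 1/2 * (1/2) <= (1 - 1 / M%:R) ^+ a * (1 - 1 / M%:R) ^+ b :> R.
  by apply: ler_pM => //; lra.
lra.
Qed.


Lemma maxn_pos (k m : nat) : (1 <= k)%N -> 0 < (maxn m k)%:R :> R.
Proof. by move=> k1; rewrite ltr0n; lia. Qed.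

Lemma act_ge0 k m a : (1 <= k)%N -> 0 <= @act_prob R k m a.
Proof.
move=> k1; have Mp := @maxn_pos k m k1.
case: a => [j|] /=; first by rewrite divr_ge0 // ltW.
rewrite subr_ge0 ler_pdivrMr // mul1r ler_nat; lia.
Qed.

Lemma act_sum k m : (1 <= k)%N -> \sum_a @act_prob R k m a = 1.
Proof.
move=> k1; have Mp := @maxn_pos k m k1.
rewrite sum_option /= sumr_const card_ord -mulr_natl mul1r; lra.
Qed.

Lemma config_ge0 k m f : (1 <= k)%N -> 0 <= @config_prob R k m f.
Proof. by move=> k1; apply: prodr_ge0 => i _; apply: act_ge0. Qed.

Lemma config_sum k m : (1 <= k)%N -> \sum_f @config_prob R k m f = 1.
Proof.
move=> k1; rewrite /config_prob.
rewrite -(bigA_distr_bigA (fun (i : 'I_m) a => @act_prob R k m a)) /=.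
by apply: big1 => i _; apply: act_sum.
Qed.


Lemma successes_le k m (f : {ffun 'I_m -> option 'I_k}) : (successes f <= m)%N.
Proof.
rewrite /successes.
set J := [set j | _].
rewrite -(card_imset _ (@Some_inj _)).
apply: (@leq_trans #|[set f i | i in 'I_m]|); last first.
  by apply: leq_trans (leq_imset_card _ _) _; rewrite card_ord.
apply: subset_leq_card; apply/subsetP => x /imsetP [j]; rewrite inE => /cards1P [i0 h] ->.
have : i0 \in [set i | f i == Some j] by rewrite h set11.
rewrite inE => /eqP <-; exact: imset_f.
Qed.

Lemma card_sum (T : finType) (P : pred T) :
  (#|[set x | P x]|)%:R = \sum_x (P x)%:R :> R.
Proof.
rewrite -sum1_card natr_sum big_mkcond; apply: eq_bigr => x _.
by rewrite inE; case: (P x).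
Qed.

Lemma card1_sum (T : finType) (A : {set T}) :
  ((#|A| == 1)%N)%:R = \sum_x (A == [set x])%:R :> R.
Proof.
case: cards1P => [[x ->]|h].
  rewrite (bigD1 x) //= eqxx big1 ?addr0 // => y yx.
  case: eqP => // /setP /(_ x); rewrite !inE eqxx eq_sym (negbTE yx) => H.
  by exfalso; move: H.
by rewrite big1 // => x _; case: eqP => // Ax; exfalso; apply: h; exists x.
Qed.

Lemma prod_bool (I : finType) (b : I -> bool) :
  \prod_i (b i)%:R = [forall i, b i]%:R :> R.
Proof.
case: (boolP [forall i, b i]) => [/forallP h | ].
  by rewrite big1 // => i _; rewrite h.
rewrite negb_forall => /existsP [i hi].
by rewrite (bigD1 i) //= (negbTE hi) mul0r.
Qed.

Lemma pick_sum k m (j : 'I_k) :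
  \sum_a @act_prob R k m a * (a == Some j)%:R = 1 / (maxn m k)%:R.
Proof.
rewrite (bigD1 (Some j)) //= eqxx mulr1 big1 ?addr0 // => a /negbTE ->.
by rewrite mulr0.
Qed.

Lemma factor k m (j : 'I_k) (i0 : 'I_m) : (1 <= k)%N ->
  \prod_i \sum_a @act_prob R k m a * ((a == Some j) == (i == i0))%:R
  = 1 / (maxn m k)%:R * (1 - 1 / (maxn m k)%:R) ^+ m.-1.
Proof.
move=> k1.
rewrite (bigD1 i0) //=; congr (_ * _).
  by under eq_bigr do rewrite eqxx eqb_id; apply: pick_sum.
rewrite (eq_bigr (fun _ => 1 - 1 / (maxn m k)%:R)); last first.
  move=> i /negbTE ->.
  under eq_bigr do rewrite eqbF_neg.
  have -> : \sum_a act_prob R m a * (~~ (a == Some j))%:R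
      = \sum_a (act_prob R m a - act_prob R m a * (a == Some j)%:R).
    by apply: eq_bigr => a _; case: (a == Some j); rewrite /= ?mulr0 ?mulr1 ?subr0 ?subrr.
  by rewrite sumrB act_sum // pick_sum.
have -> : \prod_(i | i != i0) (1 - 1 / (maxn m k)%:R) =
          \prod_(i in predC1 i0) (1 - 1 / (maxn m k)%:R) :> R by [].
by rewrite prodr_const cardC1 card_ord.
Qed.


Lemma succ_expand k m (f : {ffun 'I_m -> option 'I_k}) :
  (successes f)%:R = \sum_(j : 'I_k) \sum_(i0 : 'I_m)
     \prod_i ((f i == Some j) == (i == i0))%:R :> R.
Proof.
rewrite /successes card_sum; apply: eq_bigr => j _.
rewrite card1_sum; apply: eq_bigr => i0 _.
rewrite prod_bool; congr (_%:R).
congr (nat_of_bool _). apply/idP/idP => [/eqP h|/forallP h].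
  apply/forallP => i; move/setP: h => /(_ i); rewrite !inE => ->; exact: eqxx.
by apply/eqP/setP => i; rewrite !inE; exact: (eqP (h i)).
Qed.

Lemma exp_succ k m : (1 <= k)%N ->
  \sum_f @config_prob R k m f * (successes f)%:R
  = k%:R * m%:R * (1 / (maxn m k)%:R * (1 - 1 / (maxn m k)%:R) ^+ m.-1).
Proof.
move=> k1.
pose G (f : {ffun 'I_m -> option 'I_k}) (j : 'I_k) (i0 : 'I_m) : R :=
  @config_prob R k m f * \prod_(i : 'I_m) ((f i == Some j) == (i == i0))%:R.
have inner : forall (j : 'I_k) (i0 : 'I_m),
  \sum_(f : {ffun 'I_m -> option 'I_k}) G f j i0
  = 1 / (maxn m k)%:R * (1 - 1 / (maxn m k)%:R) ^+ m.-1.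
  move=> j i0.
  rewrite -(@factor k m j i0 k1).
  rewrite (bigA_distr_bigA (fun (i : 'I_m) a => @act_prob R k m a * ((a == Some j) == (i == i0))%:R)) /=.
  apply: eq_bigr => f _.
  by rewrite /G /config_prob -big_split.
move: inner.
generalize (1 / (maxn m k)%:R * (1 - 1 / (maxn m k)%:R) ^+ m.-1 : R) => c inner.
transitivity (\sum_(f : {ffun 'I_m -> option 'I_k}) \sum_(j : 'I_k) \sum_(i0 : 'I_m) G f j i0).
  apply: eq_bigr => f _; rewrite succ_expand mulr_sumr; apply: eq_bigr => j _.
  by rewrite mulr_sumr.
rewrite exchange_big /=.
transitivity (\sum_(j : 'I_k) \sum_(i0 : 'I_m) c).
  apply: eq_bigr => j _; rewrite exchange_big /=; apply: eq_bigr => i0 _; exact: (inner j i0).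
by rewrite !sumr_const !card_ord -mulrnA -[c *+ _]mulr_natl natrM [m%:R * _]mulrC.
Qed.

Lemma es_bound k m : (1 <= k)%N -> (1 <= m)%N ->
  (minn m k)%:R / 4 <=
  k%:R * m%:R * (1 / (maxn m k)%:R * (1 - 1 / (maxn m k)%:R) ^+ m.-1) :> R.
Proof.
move=> k1 m1.
have Mp := @maxn_pos k m k1.
have hkm : (k * m = minn m k * maxn m k)%N by lia.
have e : k%:R * m%:R * (1 / (maxn m k)%:R) = (minn m k)%:R :> R.
  by rewrite -natrM hkm natrM mul1r mulfK // gt_eqF.
rewrite mulrA e.
have x0 : 0 <= 1 / (maxn m k)%:R :> R by rewrite divr_ge0 // ltW.
have x1 : 1 / (maxn m k)%:R <= 1 :> R by rewrite ler_pdivrMr // mul1r ler1n; lia.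
have y0 : 0 <= 1 - 1 / (maxn m k)%:R :> R by lra.
have y1 : 1 - 1 / (maxn m k)%:R <= 1 :> R by lra.
have h1 : (1 - 1 / (maxn m k)%:R) ^+ (maxn m k).-1 <= (1 - 1 / (maxn m k)%:R) ^+ m.-1 :> R.
  by apply: ler_wiXn2l => //; lia.
have h2 : 1 / 4 <= (1 - 1 / (maxn m k)%:R) ^+ (maxn m k).-1 :> R.
  by apply: quarter; lia.
have h0 : 0 <= (minn m k)%:R :> R by [].
have : (minn m k)%:R * (1 / 4) <= (minn m k)%:R * (1 - 1 / (maxn m k)%:R) ^+ m.-1 :> R.
  by apply: ler_wpM2l => //; lra.
lra.
Qed.

Definition V (k m : nat) : R := 4 * m%:R / k%:R + 4 * (minn m k)%:R.

Lemma V_ge0 k m : 0 <= V k m.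
Proof. by rewrite /V; apply: addr_ge0; [apply: divr_ge0 => //; apply: mulr_ge0 | apply: mulr_ge0]. Qed.

Lemma V0 k : V k 0 = 0.
Proof. by rewrite /V min0n !mulr0 mul0r addr0. Qed.

Lemma drift k m : (1 <= k)%N -> (1 <= m)%N ->
  \sum_f @config_prob R k m f * V k (m - successes f) <= V k m - 1.
Proof.
move=> k1 m1.
have Kp : 0 < k%:R :> R by rewrite ltr0n.
set c : R := 4 / k%:R + (m <= k)%N%:R * 4.
have c0 : 0 <= c by rewrite /c; apply: addr_ge0; [apply: divr_ge0 | apply: mulr_ge0].
have pw : forall f : {ffun 'I_m -> option 'I_k},
    V k (m - successes f) <= V k m - c * (successes f)%:R.
  move=> f; have hs := @successes_le k m f.
  rewrite /V /c natrB //.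
  set s := successes f in hs *.
  have e : forall x : R, 4 * x / k%:R = (4 / k%:R) * x by move=> x; rewrite mulrAC.
  rewrite !e.
  case: (leqP m k) => hmk.
    have e2 : minn (m - s) k = (m - s)%N by lia.
    rewrite e2 natrB //= mul1r; set ik := 4 / k%:R; nra.
  have : (minn (m - s) k)%:R <= k%:R :> R by rewrite ler_nat; lia.
  rewrite /= mul0r addr0; set ik := 4 / k%:R; nra.
apply: le_trans (_ : \sum_f @config_prob R k m f * (V k m - c * (successes f)%:R) <= _).
  by apply: ler_sum => f _; apply: ler_wpM2l; [apply: config_ge0 | apply: pw].
have -> : \sum_f @config_prob R k m f * (V k m - c * (successes f)%:R)
   = V k m * \sum_f @config_prob R k m f - c * \sum_f @config_prob R k m f * (successes f)%:R.
  rewrite mulr_sumr mulr_sumr -sumrB; apply: eq_bigr => f _; ring.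
rewrite config_sum // mulr1 exp_succ //.
have hb := @es_bound k m k1 m1.
have : c * ((minn m k)%:R / 4) <= c * (k%:R * m%:R * (1 / (maxn m k)%:R * (1 - 1 / (maxn m k)%:R) ^+ m.-1)).
  by apply: ler_wpM2l.
suff : 1 <= c * ((minn m k)%:R / 4) by lra.
rewrite /c; case: (leqP m k) => hmk.
  rewrite /= mul1r.
  have : 1 <= m%:R :> R by rewrite ler1n.
  have : 0 <= 4 / k%:R :> R by rewrite divr_ge0.
  move=> h1 h2.
  have : 0 <= 4 / k%:R * (m%:R / 4) :> R by rewrite mulr_ge0 // divr_ge0.
  lra.
rewrite /= mul0r addr0.
have kn : k%:R != 0 :> R by rewrite gt_eqF.
suff -> : 4 / k%:R * (k%:R / 4) = 1 :> R by [].
by field.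
Qed.

Lemma trans_exp k m n (g : nat -> R) : (m <= n)%N ->
  \sum_(0 <= m' < n.+1) trans R k m m' * g m'
  = \sum_f @config_prob R k m f * g (m - successes f)%N.
Proof.
move=> hmn; rewrite /trans.
transitivity (\sum_(0 <= m' < n.+1) \sum_(f : {ffun 'I_m -> option 'I_k})
   (if (m - successes f)%N == m' then @config_prob R k m f * g m' else 0)).
  apply: eq_bigr => m' _; rewrite big_distrl /= big_mkcond /=.
  by apply: eq_bigr => f _; case: ifP; rewrite ?mul0r.
rewrite exchange_big /=; apply: eq_bigr => f _.
rewrite -big_mkcond /=.
rewrite (eq_bigl (fun m' => m' == (m - successes f)%N)); last by move=> x; rewrite eq_sym.
rewrite big_nat1_eq ifT //.
have := @successes_le k m f; lia.
Qed.

Lemma trans_ge0 k m m' : (1 <= k)%N -> 0 <= trans R k m m'.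
Proof. by move=> k1; apply: sumr_ge0 => f _; apply: config_ge0. Qed.

Lemma alive_ge0 k n t m' : (1 <= k)%N -> 0 <= alive R k n t m'.
Proof.
move=> k1; elim: t m' => [|t IH] m' /=; first by rewrite ler0n.
case: eqP => _ //; apply: sumr_ge0 => m _; apply: mulr_ge0 => //.
exact: trans_ge0.
Qed.

Definition Phi k n t := \sum_(1 <= m < n.+1) alive R k n t m * V k m.

Lemma Phi_ge0 k n t : (1 <= k)%N -> 0 <= Phi k n t.
Proof.
by move=> k1; apply: sumr_ge0 => m _; apply: mulr_ge0; [apply: alive_ge0 | apply: V_ge0].
Qed.

Lemma Phi_step k n t : (1 <= k)%N ->
  Phi k n t.+1 <= Phi k n t - tail_prob R k n t.
Proof.
move=> k1; rewrite /Phi /tail_prob.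
have E : \sum_(1 <= m' < n.+1) alive R k n t.+1 m' * V k m' =
  \sum_(1 <= m < n.+1) alive R k n t m *
     \sum_f @config_prob R k m f * V k (m - successes f)%N.
  transitivity (\sum_(1 <= m' < n.+1) \sum_(1 <= m < n.+1)
     alive R k n t m * (trans R k m m' * V k m')).
    apply: eq_big_nat => m' /andP [h1 _] /=.
    have -> : (m' == 0%N) = false by case: m' h1.
    by rewrite mulr_suml; apply: eq_bigr => m _; rewrite mulrA.
  rewrite exchange_big /=; apply: eq_big_nat => m /andP [h1 h2].
  rewrite -mulr_sumr -(@trans_exp k m n (V k)) //.
  by rewrite [in RHS](@big_ltn _ _ _ 0) // V0 mulr0 add0r.
rewrite E -sumrB; apply: ler_sum_nat => m /andP [h1 h2].
have -> : forall a b : R, a * b - a = a * (b - 1) by move=> a b; ring.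
apply: ler_wpM2l; first exact: alive_ge0.
exact: drift.
Qed.

Lemma tail_sum k n N : (1 <= k)%N ->
  \sum_(t < N) tail_prob R k n t <= Phi k n 0 - Phi k n N.
Proof.
move=> k1; elim: N => [|N IH]; first by rewrite big_ord0 subrr.
rewrite big_ord_recr /=.
have := @Phi_step k n N k1; lra.
Qed.

Lemma Phi0 k n : (1 <= n)%N -> Phi k n 0 = V k n.
Proof.
move=> n1; rewrite /Phi big_nat_recr //= eqxx mul1r.
rewrite big1_seq ?add0r // => m /andP [_]; rewrite mem_index_iota => /andP [_ h].
by rewrite (ltn_eqF h) mul0r.
Qed.

End Proofs.

Theorem lemma9 (R : realType) :
  exists C : R, 0 < C /\
  forall k : nat, (1 <= k)%N ->
  exists N0 : nat, forall n : nat, (N0 <= n)%N -> (k < n)%N ->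
  forall N : nat,
    expected_time_partial R k n N <= C * ((n - k)%:R / k%:R).
Proof.
exists 8; split => // k k1; exists (k * k + 2 * k)%N => n hn hkn N.
rewrite /expected_time_partial.
apply: le_trans (@tail_sum R k n N k1) _.
have := @Phi_ge0 R k n N k1.
rewrite Phi0; last by lia.
move=> hP.
suff : V R k n <= 8 * ((n - k)%:R / k%:R) by lra.
rewrite /V.
have -> : minn n k = k by lia.
rewrite natrB; last by lia.
have Kp : 0 < k%:R :> R by rewrite ltr0n.
have kn : k%:R != 0 :> R by rewrite gt_eqF.
have hn' : k%:R * k%:R + 2 * k%:R <= n%:R :> R.
  by rewrite -natrM -(natrM _ 2) -natrD ler_nat; lia.
rewrite -subr_ge0.
have -> : 8 * ((n%:R - k%:R) / k%:R) - (4 * n%:R / k%:R + 4 * k%:R)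
   = (4 * n%:R - 4 * (k%:R * k%:R) - 8 * k%:R) / k%:R :> R by field.
by apply: divr_ge0; [lra | apply: ltW].
Qed.
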